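(* Consider Algorithm PDS-SPP described in the context (with an arbitrary vector $v_k$ used in the $x$-update). Suppose that $$\alpha_k^t=1,\quad\|\mathcal A\|^2\le\eta_k^{t-1}q_k^t\quad\text{for all }t\ge2,\ k\ge1,$$ $$\beta_kT_{k-1}\alpha_k^1=\beta_{k-1}T_k,\quad\alpha_k^1\|\mathcal A\|^2\le\eta_{k-1}^{T_{k-1}}q_k^1\quad\text{for all }k\ge2.$$ Let $$B=\sum_{k=1}^N\frac{\beta_k}{T_k}\sum_{t=1}^{T_k}\big[\langle\mathcal A^\top z_k^t-\mathcal A^\top z,x_k^t-\tilde u_k^t\rangle+q_k^tU(z_k^{t-1},z_k^t)+\eta_k^tV(x_k^{t-1},x_k^t)\big].$$ Then for every $z\in\mathcal Z$, $$B\ge-\frac{\beta_N}{T_N}\|\mathcal A\|\,|z_N-z|\,\|x_N-x_N^{T_N-1}\|+\frac{\beta_N\eta_N^{T_N}}{2T_N}\|x_N^{T_N-1}-x_N^{T_N}\|^2.$$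
   Context: Setting. $\mathcal X$ closed convex subset of a finite-dimensional space with norm $\|\cdot\|$; $\mathcal Z$ closed convex subset of a finite-dimensional space with norm $|\cdot|$; $\mathcal A$ linear with $\|\mathcal A\|:=\sup\{\langle\mathcal Ax,z\rangle:\|x\|\le1,|z|\le1\}$; $h$ convex on $\mathcal Z$; $\mu\ge0$; $\nu$ $1$-strongly convex on $\mathcal X$ w.r.t. $\|\cdot\|$; $\zeta$ $1$-strongly convex on $\mathcal Z$ w.r.t. $|\cdot|$; $U(\hat z,z)=\zeta(z)-\zeta(\hat z)-\langle\zeta'(\hat z),z-\hat z\rangle$, $V(\hat x,x)=\nu(x)-\nu(\hat x)-\langle\nu'(\hat x),x-\hat x\rangle$. Algorithm: $x_0\in\mathcal X$, $z_0\in\mathcal Z$; for $k=1,\dots,N$, with some vector $v_k$ and positive integer $T_k$: $x_k^0=x_{k-1}$, $z_k^0=z_{k-1}$, $x_k^{-1}=x_{k-1}^{T_{k-1}-1}$ ($x_1^{-1}=x_0$); for $t=1,\dots,T_k$: $\tilde u_k^t=x_k^{t-1}+\alpha_k^t(x_k^{t-1}-x_k^{t-2})$, $z_k^t=\arg\min_{z\in\mathcal Z}h(z)+\langle-\mathcal A\tilde u_k^t,z\rangle+q_k^tU(z_k^{t-1},z)$, $x_k^t=\arg\min_{x\in\mathcal X}\mu\nu(x)+\langle v_k+\mathcal A^\top z_k^t,x\rangle+\eta_k^tV(x_k^{t-1},x)+p_kV(x_{k-1},x)$; $x_k=x_k^{T_k}$, $z_k=z_k^{T_k}$. Parameters: positive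 $\beta_k,q_k^t,\eta_k^t,p_k$, nonnegative $\alpha_k^t$. *)

(* Defs.v *)
From HB Require Import structures.
From mathcomp Require Import all_boot all_order all_algebra.
From mathcomp Require Import all_classical all_reals all_analysis.
Set Implicit Arguments. Unset Strict Implicit. Unset Printing Implicit Defensive.
Import Order.TTheory GRing.Theory Num.Theory.
Import numFieldNormedType.Exports.
Local Open Scope classical_set_scope.
Local Open Scope ring_scope.

Section Defs.
Variable R : realType.

Definition dot (n : nat) (u v : 'rV[R]_n) : R := \sum_(i < n) u 0 i * v 0 i.

Definition is_norm (n : nat) (N : 'rV[R]_n -> R) : Prop :=
  [/\ forall x y, N (x + y) <= N x + N y,
      forall (a : R) x, N (a *: x) = `|a| * N x
    & forall x, N x = 0 -> x = 0].

(* ||A|| = sup { <A x, z> : ||x|| <= 1, |z| <= 1 }, where A x := x *m A *)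
Definition opnorm (n m : nat) (nx : 'rV[R]_n -> R) (nz : 'rV[R]_m -> R)
  (A : 'M[R]_(n, m)) : R :=
  sup [set r | exists x z, [/\ nx x <= 1, nz z <= 1 & r = dot (x *m A) z]].

Definition convex_set_rV (n : nat) (S : set 'rV[R]_n) : Prop :=
  forall x y (l : R), S x -> S y -> 0 <= l <= 1 -> S (l *: x + (1 - l) *: y).

Definition convex_on (n : nat) (S : set 'rV[R]_n) (f : 'rV[R]_n -> R) : Prop :=
  forall x y (l : R), S x -> S y -> 0 <= l <= 1 ->
    f (l *: x + (1 - l) *: y) <= l * f x + (1 - l) * f y.

Definition strongly_convex_on (n : nat) (S : set 'rV[R]_n) (nrm : 'rV[R]_n -> R)
  (f : 'rV[R]_n -> R) : Prop :=
  forall x y (l : R), S x -> S y -> 0 <= l <= 1 ->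
    f (l *: x + (1 - l) *: y)
      <= l * f x + (1 - l) * f y - l * (1 - l) / 2 * nrm (x - y) ^+ 2.

Definition subgradient_on (n : nat) (S : set 'rV[R]_n) (f : 'rV[R]_n -> R)
  (g : 'rV[R]_n -> 'rV[R]_n) : Prop :=
  forall x y, S x -> S y -> f x + dot (g x) (y - x) <= f y.

Definition bregman (n : nat) (f : 'rV[R]_n -> R) (g : 'rV[R]_n -> 'rV[R]_n)
  (xh x : 'rV[R]_n) : R := f x - f xh - dot (g xh) (x - xh).

Definition xend (n : nat) (x : nat -> nat -> 'rV[R]_n) (x0 : 'rV[R]_n)
  (T : nat -> nat) (j : nat) : 'rV[R]_n :=
  if j is 0 then x0 else x j (T j).

(* x_k^{-1} = x_{k-1}^{T_{k-1}-1} (k >= 2), x_1^{-1} = x_0; argument is j = k-1 *)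
Definition xminus1 (n : nat) (x : nat -> nat -> 'rV[R]_n) (x0 : 'rV[R]_n)
  (T : nat -> nat) (j : nat) : 'rV[R]_n :=
  if j is 0 then x0 else x j (T j).-1.

Definition xtm2 (n : nat) (x : nat -> nat -> 'rV[R]_n) (x0 : 'rV[R]_n)
  (T : nat -> nat) (k t : nat) : 'rV[R]_n :=
  if t is 1 then xminus1 x x0 T k.-1 else x k (t - 2)%N.

Definition utilde (n : nat) (x : nat -> nat -> 'rV[R]_n) (x0 : 'rV[R]_n)
  (T : nat -> nat) (alpha : nat -> nat -> R) (k t : nat) : 'rV[R]_n :=
  x k t.-1 + alpha k t *: (x k t.-1 - xtm2 x x0 T k t).

End Defs.

(* Main.v *)
Require Import Defs.
From HB Require Import structures.
From mathcomp Require Import all_boot all_order all_algebra.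
From mathcomp Require Import all_classical all_reals all_analysis.
Import Order.TTheory GRing.Theory Num.Theory.
Import numFieldNormedType.Exports.
Local Open Scope classical_set_scope.
Local Open Scope ring_scope.
From mathcomp Require Import ring lra.
Set Implicit Arguments. Unset Strict Implicit. Unset Printing Implicit Defensive.
Section Aux.
Variable R : realType.

Lemma dotDl n (u v w : 'rV[R]_n) : dot (u + v) w = dot u w + dot v w.
Proof. by rewrite /dot -big_split /=; apply: eq_bigr => i _; rewrite mxE mulrDl. Qed.
Lemma dotDr n (u v w : 'rV[R]_n) : dot u (v + w) = dot u v + dot u w.
Proof. by rewrite /dot -big_split /=; apply: eq_bigr => i _; rewrite mxE mulrDr. Qed.
Lemma dotZl n a (u w : 'rV[R]_n) : dot (a *: u) w = a * dot u w.
Proof. by rewrite /dot mulr_sumr; apply: eq_bigr => i _; rewrite mxE mulrA. Qed.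
Lemma dotZr n a (u w : 'rV[R]_n) : dot u (a *: w) = a * dot u w.
Proof. by rewrite /dot mulr_sumr; apply: eq_bigr => i _; rewrite mxE mulrCA. Qed.
Lemma dotNl n (u w : 'rV[R]_n) : dot (- u) w = - dot u w.
Proof. by rewrite -scaleN1r dotZl mulN1r. Qed.
Lemma dotNr n (u w : 'rV[R]_n) : dot u (- w) = - dot u w.
Proof. by rewrite -scaleN1r dotZr mulN1r. Qed.
Lemma dot0r n (u : 'rV[R]_n) : dot u 0 = 0.
Proof. by rewrite -(scale0r 0) dotZr mul0r. Qed.
Lemma dot0l n (u : 'rV[R]_n) : dot 0 u = 0.
Proof. by rewrite -(scale0r 0) dotZl mul0r. Qed.
Lemma dotBr n (u v w : 'rV[R]_n) : dot u (v - w) = dot u v - dot u w.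
Proof. by rewrite dotDr dotNr. Qed.

Lemma dot_swap n m (x : 'rV[R]_n) (A : 'M[R]_(n, m)) (z : 'rV[R]_m) :
  dot (x *m A) z = dot (z *m A^T) x.
Proof.
rewrite /dot.
under eq_bigr => i _ do rewrite mxE big_distrl /=.
rewrite exchange_big /=; apply: eq_bigr => i _.
rewrite mxE big_distrl /=; apply: eq_bigr => j _.
rewrite mxE; ring.
Qed.

Section Norm.
Variables (n : nat) (nx : 'rV[R]_n -> R).
Hypothesis hn : is_norm nx.

Lemma nrm0 : nx 0 = 0.
Proof. by case: hn => _ hZ _; rewrite -(scale0r 0) hZ normr0 mul0r. Qed.
Lemma nrmN x : nx (- x) = nx x.
Proof. by case: hn => _ hZ _; rewrite -scaleN1r hZ normrN normr1 mul1r. Qed.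
Lemma nrm_ge0 x : 0 <= nx x.
Proof.
case: hn => hD _ _; have := hD x (- x); rewrite subrr nrm0 nrmN => h.
lra.
Qed.
Lemma nrmB x y : nx (x - y) = nx (y - x).
Proof. by rewrite -nrmN opprB. Qed.
Lemma nrm_sum (I : Type) (r : seq I) (P : pred I) (F : I -> 'rV[R]_n) :
  nx (\sum_(i <- r | P i) F i) <= \sum_(i <- r | P i) nx (F i).
Proof.
case: hn => hD _ _.
elim/big_rec2: _ => [|i y1 y2 _ h]; first by rewrite nrm0.
by apply: le_trans (hD _ _) _; rewrite lerD2l.
Qed.

Lemma nrm_le_mx : exists K, 0 <= K /\ forall x, nx x <= K * `|x|.
Proof.
case: hn => hD hZ _.
exists (\sum_(i < n) nx (delta_mx 0 i)); split.
  by apply: sumr_ge0 => i _; exact: nrm_ge0.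
move=> x; rewrite {1}(row_sum_delta x).
apply: le_trans; first exact: nrm_sum.
rewrite mulr_suml; apply: ler_sum => i _; rewrite hZ mulrC ler_wpM2l ?nrm_ge0//.
rewrite [leRHS]/Num.norm /= mx_normrE; apply/bigmax_geP; right; exists (0, i) => //.
Qed.

Lemma nrm_continuous : continuous nx.
Proof.
have [K [K0 hK]] := nrm_le_mx.
move=> x. apply: (proj2 (@cvgrPdist_le _ _ _ (nbhs x) _ _ _)) => e e0.
have eK : 0 < e / (K + 1) by rewrite divr_gt0 // ltr_wpDl.
have := @near_ball _ _ x _ eK.
apply: filterS => y; rewrite mx_norm_ball /= => hy.
have h1 : `|nx x - nx y| <= nx (x - y).
  case: hn => hD _ _.
  rewrite ler_norml; apply/andP; split.
    have := hD (y - x) x; rewrite subrK nrmB; lra.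
  have := hD (x - y) y; rewrite subrK; lra.
apply: le_trans h1 _; apply: le_trans (hK _) _.
have : K * `|x - y| <= K * (e / (K + 1)) by rewrite ler_wpM2l // ltW.
move=> h; apply: le_trans h _.
rewrite mulrA ler_pdivrMr ?ltr_wpDl // mulrDr mulr1 mulrC lerDl ltW //.
Qed.

Lemma nrm_eq0 x : nx x = 0 -> x = 0.
Proof. by case: hn => _ _; apply. Qed.

Lemma nrm_equiv : exists2 c, 0 < c & forall x, c * `|x| <= nx x.
Proof.
case: (posnP n) => [n0|n0].
  exists 1 => // x.
  have -> : x = 0 by apply/matrixP => i [j hj]; exfalso; move: hj; rewrite n0.
  by rewrite normr0 mulr0 nrm_ge0.
pose A := [set y : 'rV[R]_n | `|y| = 1].
have A0 : A !=set0.
  pose v : 'rV[R]_n := delta_mx 0 (Ordinal n0).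
  have v0 : `|v| != 0.
    rewrite normr_eq0; apply/eqP => /matrixP /(_ 0 (Ordinal n0)).
    by rewrite !mxE !eqxx /= => /eqP; rewrite oner_eq0.
  exists (`|v|^-1 *: v); rewrite /A /= normrZ normrV ?unitfE // normr_id.
  by rewrite mulVf.
have cA : compact A.
  apply: bounded_closed_compact.
    rewrite /bounded_near; exists 1; split => // M M1 y; rewrite /A /= => ->; exact: ltW.
  apply: (@preimage_closed _ _ (fun y : 'rV[R]_n => `|y|) [set r | r = 1]).
    by move=> y _; exact: norm_continuous.
  exact: closed_eq.
have [c cA' hc] := EVT_min_rV A0 cA (continuous_subspaceT nrm_continuous).
have c1 : `|c| = 1 by move: cA'; rewrite inE.
have cpos : 0 < nx c.
  rewrite lt_def nrm_ge0 andbT; apply/eqP => /nrm_eq0 c0.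
  by move: c1; rewrite c0 normr0 => /eqP; rewrite eq_sym oner_eq0.
exists (nx c) => // x.
have [->|x0] := eqVneq x 0; first by rewrite normr0 mulr0 nrm_ge0.
have nx0 : `|x| != 0 by rewrite normr_eq0.
have uA : (`|x|^-1 *: x) \in A.
  by rewrite inE /A /= normrZ normrV ?unitfE // normr_id mulVf.
have := hc _ uA; case: hn => _ hZ _; rewrite hZ normrV ?unitfE // normr_id.
move=> h.
have : `|x| * nx c <= `|x| * (`|x|^-1 * nx x) by rewrite ler_wpM2l.
by rewrite mulrA mulfV // mul1r mulrC.
Unshelve. all: by end_near.
Qed.

End Norm.
End Aux.

Section Op.
Variables (R : realType) (n m : nat) (nx : 'rV[R]_n -> R) (nz : 'rV[R]_m -> R)
  (A : 'M[R]_(n, m)).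
Hypotheses (hx : is_norm nx) (hz : is_norm nz).

Let S := [set r | exists x z, [/\ nx x <= 1, nz z <= 1 & r = dot (x *m A) z]].

Lemma S_has_sup : has_sup S.
Proof.
have [cx cx0 hcx] := nrm_equiv hx.
have [cz cz0 hcz] := nrm_equiv hz.
split.
  exists 0, 0, 0; rewrite (nrm0 hx) (nrm0 hz) mul0mx dot0l; split => //.
exists (\sum_j \sum_i (cx^-1 * `|A i j| * cz^-1)) => r [x [z [nx1 nz1 ->]]].
have bx : forall i, `|x 0 i| <= cx^-1.
  move=> i; rewrite -(ler_pM2l cx0) mulfV ?gt_eqF //.
  apply: (le_trans _ nx1); apply: le_trans (hcx x); rewrite ler_pM2l //.
  rewrite [leRHS]/Num.norm /= mx_normrE; apply/bigmax_geP; right; exists (0, i) => //.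
have bz : forall i, `|z 0 i| <= cz^-1.
  move=> i; rewrite -(ler_pM2l cz0) mulfV ?gt_eqF //.
  apply: (le_trans _ nz1); apply: le_trans (hcz z); rewrite ler_pM2l //.
  rewrite [leRHS]/Num.norm /= mx_normrE; apply/bigmax_geP; right; exists (0, i) => //.
rewrite /dot; apply: ler_sum => j _; rewrite mxE big_distrl /=.
apply: ler_sum => i _.
apply: le_trans (ler_norm _) _; rewrite !normrM.
apply: ler_pM; rewrite ?mulr_ge0 //.
by apply: ler_pM.
Qed.

Lemma opnorm_ge x z : nx x <= 1 -> nz z <= 1 -> dot (x *m A) z <= opnorm nx nz A.
Proof.
move=> h1 h2; apply: (sup_upper_bound S_has_sup); by exists x, z.
Qed.

Lemma opnorm_ge0 : 0 <= opnorm nx nz A.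
Proof.
have := @opnorm_ge 0 0; rewrite (nrm0 hx) (nrm0 hz) mul0mx dot0l; apply => //.
Qed.

Lemma opnorm_bound x z : dot (x *m A) z <= opnorm nx nz A * nx x * nz z.
Proof.
have [x0|x0] := eqVneq (nx x) 0.
  by rewrite x0 (nrm_eq0 hx x0) mul0mx dot0l mulr0 mul0r.
have [z0|z0] := eqVneq (nz z) 0.
  by rewrite z0 (nrm_eq0 hz z0) dot0r mulr0.
have px : 0 < nx x by rewrite lt_def x0 nrm_ge0.
have pz : 0 < nz z by rewrite lt_def z0 nrm_ge0.
have := @opnorm_ge ((nx x)^-1 *: x) ((nz z)^-1 *: z).
case: hx => _ hZx _; case: hz => _ hZz _.
rewrite hZx hZz !ger0_norm ?invr_ge0 ?nrm_ge0 // !mulVf // lexx.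
move=> /(_ isT isT); rewrite -scalemxAl dotZl dotZr.
set d := dot (x *m A) z => h.
have -> : d = (nx x * nz z) * ((nx x)^-1 * ((nz z)^-1 * d)) by field; apply/andP.
have -> : opnorm nx nz A * nx x * nz z = (nx x * nz z) * opnorm nx nz A by ring.
by rewrite ler_wpM2l // mulr_ge0 // ltW.
Qed.

End Op.

Lemma bregman_ge (R : realType) n (S : set 'rV[R]_n) nrm f g a b :
  is_norm nrm -> convex_set_rV S -> strongly_convex_on S nrm f ->
  subgradient_on S f g -> S a -> S b ->
  nrm (b - a) ^+ 2 / 2 <= bregman f g a b.
Proof.
move=> hn cS sc sg Sa Sb.
set s := nrm (b - a) ^+ 2.
set B := bregman f g a b.
have key : forall l : R, 0 < l <= 1 -> (1 - l) * s / 2 <= B.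
  move=> l /andP [l0 l1].
  have Sy' : S (l *: b + (1 - l) *: a) by apply: cS => //; rewrite ltW.
  have h1 := sc b a l Sb Sa; rewrite ltW //= in h1; have {h1} h1 := h1 l1.
  have h2 := sg a _ Sa Sy'.
  have e : l *: b + (1 - l) *: a - a = l *: (b - a).
    by rewrite scalerBr scalerBl scale1r; by apply/matrixP => i j; rewrite !mxE; ring.
  rewrite e dotZr in h2.
  rewrite /B /bregman.
  set F := f (l *: b + (1 - l) *: a) in h1 h2.
  set D := dot (g a) (b - a) in h2 *.
  rewrite -/s in h1.
  have : l * ((1 - l) * s / 2) <= l * (f b - f a - D) by nra.
  by rewrite ler_pM2l.
have s0 : 0 <= s by rewrite /s exprn_ge0 // nrm_ge0.
have B0 : 0 <= B by have := key 1; rewrite ltr01 lexx subrr !mul0r; apply.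
have [s00|spos] := eqVneq s 0; first by rewrite s00 mul0r.
have sp : 0 < s by rewrite lt_def spos s0.
rewrite leNgt; apply/negP => Bs.
pose l := (s / 2 - B) / s.
have l0 : 0 < l by rewrite divr_gt0 // subr_gt0.
have l1 : l <= 1 by rewrite ler_pdivrMr // mul1r; lra.
have := key l; rewrite l0 l1 => /(_ isT).
rewrite /l => h. have : (1 - (s / 2 - B) / s) * s / 2 = s / 4 + B / 2 by field; rewrite spos. lra.
Qed.

Lemma inner_tele (R : realType) (Tk : nat) (term Y c : nat -> R) :
  (forall t, (1 <= t <= Tk)%N -> Y t - c t <= term t) ->
  (forall t, (2 <= t <= Tk)%N -> c t <= Y t.-1) ->
  forall s, (1 <= s <= Tk)%N -> Y s - c 1%N <= \sum_(1 <= t < s.+1) term t.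
Proof.
move=> h1 h2; elim => [//|s IH] /andP [_ sT].
case: s IH sT => [|s] IH sT; first by rewrite big_nat1; apply: h1.
rewrite big_nat_recr //=.
have hs := IH (ltnW sT).
have := h1 s.+2; rewrite sT => /(_ isT) ht.
have := h2 s.+2; rewrite sT => /(_ isT) /= hc.
lra.
Qed.

Lemma outer_tele (R : realType) (N : nat) (T : nat -> nat) (w : nat -> R)
  (term Y c : nat -> nat -> R) :
  (0 < N)%N -> (forall k, (1 <= k <= N)%N -> (0 < T k)%N) ->
  (forall k t, (1 <= k <= N)%N -> (1 <= t <= T k)%N -> Y k t - c k t <= term k t) ->
  (forall k t, (1 <= k <= N)%N -> (2 <= t <= T k)%N -> c k t <= Y k t.-1) ->
  (forall k, (2 <= k <= N)%N -> w k * c k 1%N <= w k.-1 * Y k.-1 (T k.-1)) ->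
  c 1%N 1%N <= 0 ->
  (forall k, (1 <= k <= N)%N -> 0 <= w k) ->
  w N * Y N (T N) <= \sum_(1 <= k < N.+1) w k * \sum_(1 <= t < (T k).+1) term k t.
Proof.
move=> N0 T0 h1 h2 h3 h4 w0.
have inn : forall k, (1 <= k <= N)%N ->
    Y k (T k) - c k 1%N <= \sum_(1 <= t < (T k).+1) term k t.
  move=> k hk; apply: (@inner_tele R (T k) (term k) (Y k) (c k) (fun t => h1 k t hk) (fun t => h2 k t hk) (T k)).
  by rewrite T0 // leqnn.
suff : forall K, (1 <= K <= N)%N -> w K * Y K (T K) <=
    \sum_(1 <= k < K.+1) w k * \sum_(1 <= t < (T k).+1) term k t.
  by apply; rewrite N0 leqnn.
elim => [//|K IH] /andP [_ KN].
case: K IH KN => [|K] IH KN.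
  rewrite big_nat1.
  have := inn 1%N; rewrite KN => /(_ isT) hi.
  have := w0 1%N; rewrite KN => /(_ isT) hw.
  have : w 1%N * (Y 1%N (T 1%N) - c 1%N 1%N) <= w 1%N * \sum_(1 <= t < (T 1%N).+1) term 1%N t.
    by rewrite ler_wpM2l.
  nra.
rewrite big_nat_recr //=.
have hs := IH (ltnW KN).
have := inn K.+2; rewrite KN => /(_ isT) hi.
have := w0 K.+2; rewrite KN => /(_ isT) hw.
have := h3 K.+2; rewrite KN => /(_ isT) /= hc.
have : w K.+2 * (Y K.+2 (T K.+2) - c K.+2 1%N) <= w K.+2 * \sum_(1 <= t < (T K.+2).+1) term K.+2 t.
  by rewrite ler_wpM2l.
nra.
Qed.

Unset Implicit Arguments. Set Strict Implicit. Set Printing Implicit Defensive.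

Theorem lemma5p4 (R : realType) (n m : nat)
  (X : set 'rV[R]_n) (Z : set 'rV[R]_m)
  (nx : 'rV[R]_n -> R) (nz : 'rV[R]_m -> R)
  (A : 'M[R]_(n, m)) (h : 'rV[R]_m -> R) (mu : R)
  (nu : 'rV[R]_n -> R) (nu' : 'rV[R]_n -> 'rV[R]_n)
  (zeta : 'rV[R]_m -> R) (zeta' : 'rV[R]_m -> 'rV[R]_m)
  (N : nat) (T : nat -> nat) (v : nat -> 'rV[R]_n)
  (alpha q eta : nat -> nat -> R) (beta p : nat -> R)
  (x0 : 'rV[R]_n) (z0 : 'rV[R]_m)
  (x : nat -> nat -> 'rV[R]_n) (z : nat -> nat -> 'rV[R]_m) :
  (* setting *)
  is_norm nx -> is_norm nz ->
  closed X -> convex_set_rV X -> closed Z -> convex_set_rV Z ->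
  convex_on Z h -> 0 <= mu ->
  strongly_convex_on X nx nu -> subgradient_on X nu nu' ->
  strongly_convex_on Z nz zeta -> subgradient_on Z zeta zeta' ->
  (0 < N)%N ->
  (forall k, (1 <= k <= N)%N -> (0 < T k)%N) ->
  (forall k, (1 <= k <= N)%N -> 0 < beta k /\ 0 < p k) ->
  (forall k t, (1 <= k <= N)%N -> (1 <= t <= T k)%N ->
     [/\ 0 < q k t, 0 < eta k t & 0 <= alpha k t]) ->
  (* algorithm PDS-SPP *)
  X x0 -> Z z0 ->
  (forall k, (1 <= k <= N)%N ->
     x k 0%N = xend x x0 T k.-1 /\ z k 0%N = xend z z0 T k.-1) ->
  (forall k t, (1 <= k <= N)%N -> (1 <= t <= T k)%N ->
     Z (z k t) /\
     forall w, Z w ->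
       h (z k t) + dot (- (utilde x x0 T alpha k t *m A)) (z k t)
         + q k t * bregman zeta zeta' (z k t.-1) (z k t)
       <= h w + dot (- (utilde x x0 T alpha k t *m A)) w
         + q k t * bregman zeta zeta' (z k t.-1) w) ->
  (forall k t, (1 <= k <= N)%N -> (1 <= t <= T k)%N ->
     X (x k t) /\
     forall y, X y ->
       mu * nu (x k t) + dot (v k + z k t *m A^T) (x k t)
         + eta k t * bregman nu nu' (x k t.-1) (x k t)
         + p k * bregman nu nu' (xend x x0 T k.-1) (x k t)
       <= mu * nu y + dot (v k + z k t *m A^T) y
         + eta k t * bregman nu nu' (x k t.-1) y
         + p k * bregman nu nu' (xend x x0 T k.-1) y) ->
  (* step-size conditions *)
  (forall k t, (1 <= k <= N)%N -> (2 <= t <= T k)%N ->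
     alpha k t = 1 /\ opnorm nx nz A ^+ 2 <= eta k t.-1 * q k t) ->
  (forall k, (2 <= k <= N)%N ->
     beta k * (T k.-1)%:R * alpha k 1%N = beta k.-1 * (T k)%:R /\
     alpha k 1%N * opnorm nx nz A ^+ 2 <= eta k.-1 (T k.-1) * q k 1%N) ->
  forall zz, Z zz ->
    - (beta N / (T N)%:R) * opnorm nx nz A * nz (z N (T N) - zz)
        * nx (x N (T N) - x N (T N).-1)
      + beta N * eta N (T N) / (2 * (T N)%:R) * nx (x N (T N).-1 - x N (T N)) ^+ 2
    <= \sum_(1 <= k < N.+1) (beta k / (T k)%:R) *
         \sum_(1 <= t < (T k).+1)
           (dot (z k t *m A^T - zz *m A^T) (x k t - utilde x x0 T alpha k t)
            + q k t * bregman zeta zeta' (z k t.-1) (z k t)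
            + eta k t * bregman nu nu' (x k t.-1) (x k t)).
Proof.
move=> hnx hnz _ cX _ cZ _ mu0 scX sgX scZ sgZ N0 T0 bp qea X0 Z0 init zstep xstep
  ss1 ss2 zz Zzz.
set op := opnorm nx nz A in ss1 ss2 *.
have op0 : 0 <= op by apply: opnorm_ge0.
have mem : forall k t, (1 <= k <= N)%N -> (t <= T k)%N -> X (x k t) /\ Z (z k t).
  move=> k t hk ht; case: t ht => [|t] ht.
    have [-> ->] := init k hk; clear ht.
    case: k hk => [//|[|k]] hk /=; first by split.
    have hk' : (1 <= k.+1 <= N)%N by rewrite /= ltnW //; case/andP: hk.
    have hT : (1 <= T k.+1 <= T k.+1)%N by rewrite T0 // leqnn.
    by split; [exact: (xstep _ _ hk' hT).1 | exact: (zstep _ _ hk' hT).1].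
  have ht' : (1 <= t.+1 <= T k)%N by apply/andP; split.
  by split; [exact: (xstep _ _ hk ht').1 | exact: (zstep _ _ hk ht').1].
pose w k := beta k / (T k)%:R.
pose term k t := dot (z k t *m A^T - zz *m A^T) (x k t - utilde x x0 T alpha k t)
  + q k t * bregman zeta zeta' (z k t.-1) (z k t)
  + eta k t * bregman nu nu' (x k t.-1) (x k t).
pose Phi k t := dot ((z k t - zz) *m A^T) (x k t - x k t.-1).
pose Y k t := Phi k t + eta k t / 2 * nx (x k t - x k t.-1) ^+ 2.
pose E k t := x k t.-1 - xtm2 x x0 T k t.
pose c k t := alpha k t * dot ((z k t.-1 - zz) *m A^T) (E k t)
  + alpha k t ^+ 2 * op ^+ 2 / (2 * q k t) * nx (E k t) ^+ 2.
have Tn0 : forall k, (1 <= k <= N)%N -> (T k)%:R != 0 :> R.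
  by move=> k hk; rewrite pnatr_eq0 -lt0n T0.
have H5 : forall k, (1 <= k <= N)%N -> 0 <= w k.
  move=> k hk; rewrite /w divr_ge0 //; exact: ltW (bp k hk).1.
have H1 : forall k t, (1 <= k <= N)%N -> (1 <= t <= T k)%N -> Y k t - c k t <= term k t.
  move=> k t hk ht.
  have [q0 e0 a0] := qea k t hk ht.
  have htT : (t <= T k)%N by case/andP: ht.
  have [Xt Zt] := mem k t hk htT.
  have [Xt1 Zt1] := mem k t.-1 hk (leq_trans (leq_pred t) htT).
  have bz := bregman_ge hnz cZ scZ sgZ Zt1 Zt.
  have bx := bregman_ge hnx cX scX sgX Xt1 Xt.
  set Ek := E k t.
  set P := dot ((z k t.-1 - zz) *m A^T) Ek.
  set G := dot ((z k t - z k t.-1) *m A^T) Ek.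
  have eq : term k t = Phi k t - alpha k t * P - alpha k t * G
      + q k t * bregman zeta zeta' (z k t.-1) (z k t)
      + eta k t * bregman nu nu' (x k t.-1) (x k t).
    rewrite /term /utilde -mulmxBl.
    have -> : x k t - (x k t.-1 + alpha k t *: (x k t.-1 - xtm2 x x0 T k t))
      = (x k t - x k t.-1) - alpha k t *: Ek.
      by rewrite /Ek /E; apply/matrixP => i j; rewrite !mxE; ring.
    have hPG : dot ((z k t - zz) *m A^T) Ek = P + G.
      rewrite /P /G -dotDl -mulmxDl; congr (dot (_ *m _) _).
      by apply/matrixP => i j; rewrite !mxE; ring.
    rewrite dotBr dotZr hPG /Phi; ring.
  rewrite eq /Y /c -/Ek -/P.
  set b := nz (z k t - z k t.-1).
  set e := nx Ek.
  set a := nx (x k t - x k t.-1).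
  have hG : G <= op * e * b.
    by rewrite /G -dot_swap; apply: opnorm_bound.
  have aG : alpha k t * G <= alpha k t * (op * e * b) by apply: ler_wpM2l.
  have young : alpha k t * (op * e * b)
      <= q k t * (b ^+ 2 / 2) + alpha k t ^+ 2 * op ^+ 2 / (2 * q k t) * e ^+ 2.
    have sq : 0 <= (q k t * b - alpha k t * op * e) ^+ 2 / (2 * q k t).
      by rewrite divr_ge0 // ?sqr_ge0 // mulr_ge0 // ltW.
    have -> : q k t * (b ^+ 2 / 2) + alpha k t ^+ 2 * op ^+ 2 / (2 * q k t) * e ^+ 2
      = alpha k t * (op * e * b) + (q k t * b - alpha k t * op * e) ^+ 2 / (2 * q k t).
      by field; rewrite gt_eqF.
    lra.
  have hq : q k t * (b ^+ 2 / 2) <= q k t * bregman zeta zeta' (z k t.-1) (z k t).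
    by apply: ler_wpM2l => //; apply: ltW.
  have he : eta k t * (a ^+ 2 / 2) <= eta k t * bregman nu nu' (x k t.-1) (x k t).
    by apply: ler_wpM2l => //; apply: ltW.
  lra.
have H2 : forall k t, (1 <= k <= N)%N -> (2 <= t <= T k)%N -> c k t <= Y k t.-1.
  move=> k t hk ht; have [a1 opq] := ss1 k t hk ht.
  case: t ht a1 opq => [|[|t]] // ht a1 opq.
  have ht1 : (1 <= t.+2 <= T k)%N by case/andP: ht => _ ->.
  have [q0 _ _] := qea k t.+2 hk ht1.
  have ht2 : (1 <= t.+1 <= T k)%N by case/andP: ht => _ /ltnW ->.
  have [_ e0 _] := qea k t.+1 hk ht2.
  rewrite /c /Y /E /= a1 !subSS subn0 -/(Phi k t.+1) expr1n !mul1r.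
  rewrite lerD2l.
  set e := nx (x k t.+1 - x k t).
  have ee : 0 <= e ^+ 2 by rewrite exprn_ge0 // nrm_ge0.
  apply: ler_wpM2r => //.
  rewrite ler_pdivrMr ?mulr_gt0 //.
  move: opq => /=; lra.
have H3 : forall k, (2 <= k <= N)%N -> w k * c k 1%N <= w k.-1 * Y k.-1 (T k.-1).
  move=> k hk; have [bT aop] := ss2 k hk.
  have hk1 : (1 <= k <= N)%N by case/andP: hk => /ltnW -> ->.
  have hkm : (1 <= k.-1 <= N)%N.
    clear -hk; case: k hk => [|[|k]] // /andP [_ hk]; apply/andP; split => //; exact: ltnW.
  have h1T : (1 <= 1 <= T k)%N by rewrite T0.
  have [q0 _ a0] := qea k 1%N hk1 h1T.
  have hTm : (1 <= T k.-1 <= T k.-1)%N by rewrite T0 // leqnn.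
  have [_ em _] := qea k.-1 (T k.-1) hkm hTm.
  have wa : w k * alpha k 1%N = w k.-1.
    apply/eqP; rewrite -subr_eq0 /w.
    have -> : beta k / (T k)%:R * alpha k 1%N - beta k.-1 / (T k.-1)%:R
      = (beta k * (T k.-1)%:R * alpha k 1%N - beta k.-1 * (T k)%:R)
        / ((T k)%:R * (T k.-1)%:R).
      by field; rewrite !Tn0.
    by rewrite bT subrr mul0r.
  have [hx0 hz0] := init k hk1.
  case: k hk bT aop hk1 hkm h1T q0 a0 hTm em wa hx0 hz0 => [|[|k]] // hk bT aop hk1 hkm h1T q0 a0 hTm em wa hx0 hz0.
  rewrite /c /E /Y /= hx0 hz0 /= -/(Phi k.+1 (T k.+1)).
  set P := Phi k.+1 (T k.+1).
  set e := nx _.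
  have ee : 0 <= e ^+ 2 by rewrite exprn_ge0 // nrm_ge0.
  have wm : 0 <= w k.+1 by apply: H5.
  have -> : w k.+2 * (alpha k.+2 1%N * P + alpha k.+2 1%N ^+ 2 * op ^+ 2 / (2 * q k.+2 1%N) * e ^+ 2)
    = (w k.+2 * alpha k.+2 1%N) * (P + alpha k.+2 1%N * op ^+ 2 / (2 * q k.+2 1%N) * e ^+ 2).
    by ring.
  rewrite wa; apply: ler_wpM2l => //; rewrite lerD2l; apply: ler_wpM2r => //.
  rewrite ler_pdivrMr ?mulr_gt0 //; lra.
have H4 : c 1%N 1%N <= 0.
  have h1N : (1 <= 1 <= N)%N by rewrite N0.
  have [hx10 _] := init 1%N h1N.
  rewrite /c /E /= hx10 /= subrr dot0r (nrm0 hnx).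
  by rewrite expr0n /= !mulr0 addr0.
have main := outer_tele N0 T0 H1 H2 H3 H4 H5.
apply: le_trans main.
have hN : (1 <= N <= N)%N by rewrite N0 leqnn.
set W := z N (T N) - zz.
set D := x N (T N) - x N (T N).-1.
have hP : - (op * nx D * nz W) <= Phi N (T N).
  have := opnorm_bound A hnx hnz D (- W).
  rewrite dotNr (nrmN hnz) dot_swap; rewrite /Phi -/W -/D -/op; lra.
rewrite [nx (x N (T N).-1 - x N (T N))](nrmB hnx) -/D /Y -/D.
have wN : 0 <= w N by apply: H5.
have -> : beta N * eta N (T N) / (2 * (T N)%:R) = w N * (eta N (T N) / 2).
  by rewrite /w; field; rewrite Tn0.
rewrite -/op.
have -> : - (beta N / (T N)%:R) * op * nz W * nx D = w N * (- (op * nx D * nz W)).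
  by rewrite /w; ring.
have := ler_wpM2l wN hP; lra.
Qed.
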